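(* The profinite completion $\widehat{\mathbb{N}}$ of $(\mathbb{N},+)$ is isomorphic, as a semigroup, to $(\mathbb{N} \cup \widehat{\mathbb{Z}}, \widehat{+})$, where $\mathbb{N}$ and $\widehat{\mathbb{Z}}$ are taken disjoint and $$a \,\widehat{+}\, b = \begin{cases} a + b \in \mathbb{N} & \text{if } a, b \in \mathbb{N},\\ a + b \in \widehat{\mathbb{Z}} & \text{otherwise},\end{cases}$$ where in the second case elements of $\mathbb{N}$ are mapped into $\widehat{\mathbb{Z}}$ by the natural embedding.
   Context: $\mathbb{N} = \{1,2,3,\dots\}$ and $\widehat{\mathbb{Z}} = \varprojlim_n \mathbb{Z}/n\mathbb{Z}$. For positive integers $m, n$, let $\mathbb{Z}_{m,n}$ be the semigroup with underlying set $\{1, \dots, m-1\} \sqcup \mathbb{Z}/n\mathbb{Z}$ and operation $a \dotplus b = a + b \in \{1,\dots,m-1\}$ if $a, b \in \{1,\dots,m-1\}$ and $a+b < m$, and $a \dotplus b = \overline{a+b} \in \mathbb{Z}/n\mathbb{Z}$ otherwise; the quotient map $\pi_{m,n} : \mathbb{N} \to \mathbb{Z}_{m,n}$ sends $a$ to $a$ if $a < m$ and to $\overline{a} \in \mathbb{Z}/n\mathbb{Z}$ if $a \ge m$. (Every finite quotient semigroup of $(\mathbb{N},+)$ is isomorphic to some $\mathbb{Z}_{m,n}$.) If $m \le k$ and $n \mid l$ there is a natural homomorphism $\phi_{(k,l),(m,n)} : \mathbb{Z}_{k,l} \to \mathbb{Z}_{m,n}$ compatible with the quotient maps. The profinite completion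 $\widehat{\mathbb{N}}$ is defined as the projective limit of the system $(\mathbb{Z}_{m,n}, \phi_{(k,l),(m,n)})$. *)

(* Defs.v *)
From mathcomp Require Import all_boot.
From mathcomp Require Import zify.

Set Implicit Arguments.
Unset Strict Implicit.
Unset Printing Implicit Defensive.

(* An element of Z_{m,n} is encoded in the raw carrier nat + nat:           *)
(*   inl a  encodes a in {1,...,m-1}          (valid iff 0 < a < m)          *)
(*   inr r  encodes the residue class of r in Z/nZ (valid iff r < n).        *)
Definition Zraw := (nat + nat)%type.

Definition validZ (m n : nat) (u : Zraw) : bool :=
  match u with inl a => (0 < a < m) | inr r => r < n end.

Definition piZ (m n a : nat) : Zraw := if a < m then inl a else inr (a %% n).

Definition addZ (m n : nat) (u v : Zraw) : Zraw :=
  match u, v with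
  | inl a, inl b => if a + b < m then inl (a + b) else inr ((a + b) %% n)
  | inl a, inr r => inr ((a + r) %% n)
  | inr r, inl b => inr ((r + b) %% n)
  | inr r, inr s => inr ((r + s) %% n)
  end.

(* the natural homomorphism phi_{(k,l),(m,n)} : Z_{k,l} -> Z_{m,n}
   (m <= k, n | l); it only depends on (m,n). *)
Definition phiZ (m n : nat) (u : Zraw) : Zraw :=
  match u with inl a => piZ m n a | inr r => inr (r %% n) end.

(* Indices are shifted: the component x m n lives in Z_{m+1, n+1}, so that   *)
(* (m, n) ranges over all pairs of positive integers (m+1, n+1).            *)
Definition is_Nhat (x : nat -> nat -> Zraw) : Prop :=
  (forall m n, validZ m.+1 n.+1 (x m n)) /\
  (forall m n k l, m <= k -> n.+1 %| l.+1 ->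
     phiZ m.+1 n.+1 (x k l) = x m n).

Definition Nhat := {x : nat -> nat -> Zraw | is_Nhat x}.

(* Zhat = lim_n Z/nZ, again with shifted index: z n lives in Z/(n+1)Z,       *)
(* represented by its residue in [0, n].                                    *)
Definition is_Zhat (z : nat -> nat) : Prop :=
  (forall n, z n < n.+1) /\
  (forall n l, n.+1 %| l.+1 -> z l %% n.+1 = z n).

Definition Zhat := {z : nat -> nat | is_Zhat z}.

(* positive naturals N = {1,2,3,...} *)
Definition Npos := {a : nat | 0 < a}.

Lemma phi_pi m n k l c : m <= k -> n %| l -> phiZ m n (piZ k l c) = piZ m n c.
Proof.
move=> mk nl; rewrite /piZ; case: ifP => ck //=.
have -> : (c < m) = false by apply/negbTE; rewrite -leqNgt; lia.
by rewrite modn_dvdm.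
Qed.

Lemma phiZ_add m n k l u v : m <= k -> n %| l ->
  phiZ m n (addZ k l u v) = addZ m n (phiZ m n u) (phiZ m n v).
Proof.
move=> mk nl.
case: u => [a|r]; case: v => [b|s] /=.
- have -> : (if a + b < k then inl (a + b) else inr ((a + b) %% l))
            = piZ k l (a + b) by [].
  rewrite phi_pi // /piZ.
  case: (ltnP a m) => am; case: (ltnP b m) => bm /=.
  + by [].
  + have -> : (a + b < m) = false by apply/negbTE; rewrite -leqNgt; lia.
    by rewrite modnDmr.
  + have -> : (a + b < m) = false by apply/negbTE; rewrite -leqNgt; lia.
    by rewrite modnDml.
  + have -> : (a + b < m) = false by apply/negbTE; rewrite -leqNgt; lia.
    by rewrite modnDm.
- rewrite modn_dvdm // /piZ; case: ifP => _ /=.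
  + by rewrite modnDmr.
  + by rewrite modnDm.
- rewrite modn_dvdm // /piZ; case: ifP => _ /=.
  + by rewrite modnDml.
  + by rewrite modnDm.
- by rewrite modn_dvdm // modnDm.
Qed.

Lemma validZ_add m n u v : 0 < n -> validZ m n u -> validZ m n v ->
  validZ m n (addZ m n u v).
Proof.
move=> n0; case: u => [a|r]; case: v => [b|s] /=; rewrite ?ltn_pmod //.
move=> /andP[a0 _] /andP[b0 _]; case: ifP => /= h; last by rewrite ltn_pmod.
by rewrite h andbT addn_gt0 a0.
Qed.

Definition Nhat_add_raw (x y : nat -> nat -> Zraw) : nat -> nat -> Zraw :=
  fun m n => addZ m.+1 n.+1 (x m n) (y m n).

Lemma is_Nhat_add x y : is_Nhat x -> is_Nhat y -> is_Nhat (Nhat_add_raw x y).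
Proof.
move=> [vx cx] [vy cy]; split.
- by move=> m n; apply: validZ_add.
- move=> m n k l mk nl; have mk' : m.+1 <= k.+1 by [].
  rewrite /Nhat_add_raw (phiZ_add _ _ mk' nl).
  by rewrite cx // cy.
Qed.

Definition Nhat_add (x y : Nhat) : Nhat :=
  exist _ (Nhat_add_raw (proj1_sig x) (proj1_sig y))
        (is_Nhat_add (proj2_sig x) (proj2_sig y)).

Definition Zhat_add_raw (z w : nat -> nat) : nat -> nat :=
  fun n => (z n + w n) %% n.+1.

Lemma is_Zhat_add z w : is_Zhat z -> is_Zhat w -> is_Zhat (Zhat_add_raw z w).
Proof.
move=> [vz cz] [vw cw]; split.
- by move=> n; rewrite ltn_pmod.
- move=> n l nl; rewrite /Zhat_add_raw modn_dvdm // -modnDm cz // cw // modnDm.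
Qed.

Definition Zhat_add (z w : Zhat) : Zhat :=
  exist _ (Zhat_add_raw (proj1_sig z) (proj1_sig w))
        (is_Zhat_add (proj2_sig z) (proj2_sig w)).

Lemma is_Zhat_embed a : is_Zhat (fun n => a %% n.+1).
Proof.
split; first by move=> n; rewrite ltn_pmod.
by move=> n l nl; rewrite modn_dvdm.
Qed.

Definition Zhat_embed (a : nat) : Zhat := exist _ _ (is_Zhat_embed a).

Definition NZhat := (Npos + Zhat)%type.

Lemma Npos_add_pos (a b : Npos) : 0 < proj1_sig a + proj1_sig b.
Proof. by rewrite addn_gt0 (proj2_sig a). Qed.

Definition NZhat_add (u v : NZhat) : NZhat :=
  match u, v with
  | inl a, inl b => inl (exist _ (proj1_sig a + proj1_sig b) (Npos_add_pos a b))
  | inl a, inr z => inr (Zhat_add (Zhat_embed (proj1_sig a)) z)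
  | inr z, inl b => inr (Zhat_add z (Zhat_embed (proj1_sig b)))
  | inr z, inr w => inr (Zhat_add z w)
  end.

(* Main.v *)
Require Import Defs.
From mathcomp Require Import all_boot.
From mathcomp Require Import zify.
From Stdlib Require Import ProofIrrelevance FunctionalExtensionality ClassicalEpsilon Classical.

Lemma Nhat_eq (x y : Nhat) :
  (forall m n, proj1_sig x m n = proj1_sig y m n) -> x = y.
Proof.
case: x => x hx; case: y => y hy /= H.
have E : x = y by apply: functional_extensionality => m;
  apply: functional_extensionality => n; apply: H.
subst y; f_equal; apply: proof_irrelevance.
Qed.

Lemma Zhat_eq (x y : Zhat) :
  (forall n, proj1_sig x n = proj1_sig y n) -> x = y.
Proof.
case: x => x hx; case: y => y hy /= H.
have E : x = y by apply: functional_extensionality => n; apply: H.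
subst y; f_equal; apply: proof_irrelevance.
Qed.

Lemma is_Nhat_pi a : 0 < a -> is_Nhat (fun m n => piZ m.+1 n.+1 a).
Proof.
move=> a0; split.
- move=> m n; rewrite /piZ; case: ifP => h /=; first by rewrite a0 h.
  by rewrite ltn_pmod.
- move=> m n k l mk nl; apply: phi_pi => //.
Qed.

Lemma is_Nhat_z (z : Zhat) : is_Nhat (fun m n => inr (proj1_sig z n)).
Proof.
case: z => z [vz cz]; split => /=.
- by move=> m n; apply: vz.
- by move=> m n k l mk nl /=; rewrite cz.
Qed.

Definition g (u : NZhat) : Nhat :=
  match u with
  | inl a => exist _ _ (@is_Nhat_pi (proj1_sig a) (proj2_sig a))
  | inr z => exist _ _ (@is_Nhat_z z)
  end.

Lemma addZ_pi M N a b : 0 < N -> 0 < a -> 0 < b ->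
  addZ M N (piZ M N a) (piZ M N b) = piZ M N (a + b).
Proof.
move=> N0 a0 b0; rewrite /piZ.
case: (ltnP a M) => am; case: (ltnP b M) => bm /=.
- by [].
- have -> : (a + b < M) = false by apply/negbTE; rewrite -leqNgt; lia.
  by rewrite modnDmr.
- have -> : (a + b < M) = false by apply/negbTE; rewrite -leqNgt; lia.
  by rewrite modnDml.
- have -> : (a + b < M) = false by apply/negbTE; rewrite -leqNgt; lia.
  by rewrite modnDm.
Qed.

Lemma g_hom u v : g (NZhat_add u v) = Nhat_add (g u) (g v).
Proof.
apply: Nhat_eq => m n.
case: u => [[a a0]|[z hz]]; case: v => [[b b0]|[w hw]] /=;
  rewrite /Nhat_add_raw /=.
- by rewrite addZ_pi.
- rewrite /Zhat_add_raw /piZ; case: ifP => _ //=; by rewrite modnDml.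
- rewrite /Zhat_add_raw /piZ; case: ifP => _ //=; by rewrite modnDmr.
- by [].
Qed.

Lemma g_inj : injective g.
Proof.
move=> [[a a0]|[z hz]] [[b b0]|[w hw]] /= H.
- have := f_equal (fun x : Nhat => proj1_sig x (a + b) 0) H => /=.
  rewrite /piZ.
  have -> : (a < (a + b).+1) by lia.
  have -> : (b < (a + b).+1) by lia.
  case=> ab; subst b; do 2 f_equal; apply: eq_irrelevance.
- have := f_equal (fun x : Nhat => proj1_sig x a 0) H => /=.
  by rewrite /piZ ltnSn.
- have := f_equal (fun x : Nhat => proj1_sig x b 0) H => /=.
  by rewrite /piZ ltnSn.
- f_equal; apply: Zhat_eq => n /=.
  have := f_equal (fun x : Nhat => proj1_sig x 0 n) H => /=.
  by case.
Qed.

Lemma g_surj x : exists u, g u = x.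
Proof.
case: x => x [vx cx].
have dl : forall n n', n.+1 %| (n.+1 * n'.+1).-1.+1.
  by move=> n n'; rewrite prednK ?muln_gt0 // dvdn_mulr.
have dr : forall n n', n'.+1 %| (n.+1 * n'.+1).-1.+1.
  by move=> n n'; rewrite prednK ?muln_gt0 // dvdn_mull.
case: (classic (exists m n a, x m n = inl a)) => [[m [n [a E]]]|NE].
- have va := vx m n; rewrite E /= in va; case/andP: va => a0 am.
  exists (inl (exist _ a a0)); apply: Nhat_eq => m' n' /=.
  set K := maxn m m'; set L := (n.+1 * n'.+1).-1.
  have KL : x K L = inl a.
    have := cx m n K L (leq_maxl _ _) (dl n n'); rewrite E.
    case: (x K L) => [b|r] /=; last by [].
    rewrite /piZ; case: ifP => // _ [->] //.
  have := cx m' n' K L (leq_maxr _ _) (dr n n'); rewrite KL /= => <-.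
  by [].
- have allr : forall m n, exists r, x m n = inr r.
    move=> m n; case E: (x m n) => [a|r]; last by exists r.
    by exfalso; apply: NE; exists m, n, a.
  pose z := fun n => match x 0 n with inl _ => 0 | inr r => r end.
  have xz : forall m n, x m n = inr (z n).
    move=> m n; have [r E] := allr m n.
    have vr := vx m n; rewrite E /= in vr.
    have := cx 0 n m n (leq0n _) (dvdnn _); rewrite E /= /z => <-.
    by rewrite modn_small.
  have hz : is_Zhat z.
    split.
    + move=> n; have := vx 0 n; rewrite xz //.
    + move=> n l nl; have := cx 0 n 0 l (leqnn _) nl.
      by rewrite !xz /=; case.
  exists (inr (exist _ z hz)); apply: Nhat_eq => m n /=.
  by rewrite xz.
Qed.

Theorem proposition2p1 :
  exists f : Nhat -> NZhat,
    bijective f /\ (forall x y : Nhat, f (Nhat_add x y) = NZhat_add (f x) (f y)).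
Proof.
pose f := fun x => proj1_sig (constructive_indefinite_description _ (g_surj x)).
have gf : cancel f g.
  by move=> x; rewrite /f; case: constructive_indefinite_description.
have fg : cancel g f by move=> u; apply: g_inj; rewrite gf.
exists f; split; first by exists g.
move=> x y; apply: g_inj; by rewrite g_hom !gf.
Qed.
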